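(* Let $\rho\ge1$, $t\in[-1,1]$, $\lambda=\alpha+i\beta$ with $\alpha,\beta\in\mathbb{R}$, and let $\psi=\psi_0+2\sum_{k=1}^K\psi_kT_k$ with $\psi_0,\dots,\psi_K\in\mathbb{C}$. Then $$\sup_{z\in\mathcal{E}_\rho}\Big|\frac{t+1}{2}\exp\Big(\frac{\lambda}{2}(t+1)(1-z)\Big)\psi\Big(\frac{t+1}{2}(z+1)-1\Big)\Big|\le\frac{t+1}{2}\exp\Big(\alpha+\tfrac12\sqrt{\alpha^2(\rho+\rho^{-1})^2+\beta^2(\rho-\rho^{-1})^2}\Big)\Big(|\psi_0|+\sum_{k=1}^K|\psi_k|(\rho^k+\rho^{-k})\Big).$$
   Context: $T_k$ is the Chebyshev polynomial of the first kind, $T_k(\cos\theta)=\cos(k\theta)$, extended to $\mathbb{C}$ as a polynomial. For $\rho\ge1$, $\mathcal{E}_\rho=\{z\in\mathbb{C}:|z-1|+|z+1|<\rho+\rho^{-1}\}$ is the open Bernstein ellipse. *)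

(* Defs.v *)
From Stdlib Require Import Reals.
From Coquelicot Require Import Coquelicot.
Open Scope R_scope.

Definition cexp (z : C) : C :=
  (exp (fst z) * cos (snd z), exp (fst z) * sin (snd z)).

(* Chebyshev polynomials of the first kind, evaluated on C, via the
   standard three-term recurrence T_0 = 1, T_1 = z, T_{k+2} = 2 z T_{k+1} - T_k
   (this is the unique polynomial with T_k(cos th) = cos(k th)). *)
Fixpoint chebT (k : nat) (z : C) : C :=
  match k with
  | O => RtoC 1
  | S O => z
  | S (S m as p) => Cminus (Cmult (Cmult (RtoC 2) z) (chebT p z)) (chebT m z)
  end.

(* csum f n = f 1 + ... + f n (0 if n = 0). *)
Fixpoint csum (f : nat -> C) (n : nat) : C :=
  match n with O => RtoC 0 | S m => Cplus (csum f m) (f (S m)) end.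

Fixpoint rsum (f : nat -> R) (n : nat) : R :=
  match n with O => 0 | S m => rsum f m + f (S m) end.

Definition cheb_series (psi : nat -> C) (K : nat) (w : C) : C :=
  Cplus (psi O) (Cmult (RtoC 2) (csum (fun k => Cmult (psi k) (chebT k w)) K)).

Definition bernstein_ellipse (rho : R) (z : C) : Prop :=
  Cmod (Cminus z (RtoC 1)) + Cmod (Cplus z (RtoC 1)) < rho + / rho.

(* Main.v *)
Require Import Defs.
From Stdlib Require Import Reals Lra Psatz.
From Coquelicot Require Import Coquelicot.
Open Scope R_scope.

Lemma geom_basic (x y d1 d2 : R) :
  0 <= d1 -> 0 <= d2 -> d1 * d1 = (x-1)^2 + y^2 -> d2 * d2 = (x+1)^2 + y^2 ->
  let A := (d1 + d2) / 2 in
  1 <= A /\ x^2 <= A^2 /\ y^2 * A^2 = (A^2 - 1) * (A^2 - x^2).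
Proof.
  intros h1 h2 e1 e2 A.
  assert (g1 : d1 >= 1 - x) by nra.
  assert (g2 : d2 >= 1 + x) by nra.
  assert (g3 : d2 <= d1 + 2) by nra.
  assert (g4 : d1 <= d2 + 2) by nra.
  assert (hA : 1 <= A) by (unfold A; lra).
  set (e := d2 - d1).
  assert (he : A * e = 2 * x) by (unfold A, e; nra).
  assert (hd2 : d2 = A + e/2) by (unfold A, e; lra).
  split; [exact hA|]. split.
  - assert (x^2 = (A*e)^2/4) by (rewrite he; field).
    assert (e^2 <= 4) by (unfold e; nra).
    nra.
  - assert (hy : y^2 = A^2 + e^2/4 - x^2 - 1).
    { rewrite hd2 in e2. nra. }
    rewrite hy. assert (e^2*A^2 = 4*x^2) by (replace (e^2*A^2) with ((A*e)^2) by ring; rewrite he; ring).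
    nra.
Qed.

Definition Aof (z : C) : R := (Cmod (Cminus z (RtoC 1)) + Cmod (Cplus z (RtoC 1))) / 2.

Lemma geom (z : C) :
  1 <= Aof z /\ exists c s, c^2 + s^2 = 1 /\ fst z = Aof z * c /\
     snd z = sqrt (Aof z ^2 - 1) * s.
Proof.
  destruct z as [x y].
  assert (H1 : Cmod (Cminus (x,y) (RtoC 1)) = sqrt ((x-1)^2 + y^2)).
  { unfold Cmod, Cminus, Cplus, Copp, RtoC; simpl; f_equal; ring. }
  assert (H2 : Cmod (Cplus (x,y) (RtoC 1)) = sqrt ((x+1)^2 + y^2)).
  { unfold Cmod, Cminus, Cplus, Copp, RtoC; simpl; f_equal; ring. }
  unfold Aof. rewrite H1, H2. simpl fst; simpl snd.
  set (d1 := sqrt ((x-1)^2 + y^2)). set (d2 := sqrt ((x+1)^2 + y^2)).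
  assert (p1 : 0 <= d1) by apply sqrt_pos.
  assert (p2 : 0 <= d2) by apply sqrt_pos.
  assert (q1 : d1 * d1 = (x-1)^2 + y^2) by (apply sqrt_sqrt; apply Rplus_le_le_0_compat; apply pow2_ge_0).
  assert (q2 : d2 * d2 = (x+1)^2 + y^2) by (apply sqrt_sqrt; apply Rplus_le_le_0_compat; apply pow2_ge_0).
  generalize (geom_basic x y d1 d2 p1 p2 q1 q2); cbv zeta; intros [hA [hx hy]].
  set (A := (d1 + d2) / 2) in *.
  split; [exact hA|].
  set (B := sqrt (A^2 - 1)).
  assert (hB2 : B * B = A^2 - 1) by (unfold B; apply sqrt_sqrt; nra).
  assert (hB0 : 0 <= B) by apply sqrt_pos.
  exists (x / A).
  destruct (Req_dec B 0) as [hB | hB].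
  - assert (hy0 : y = 0).
    { rewrite hB in hB2. assert (y^2*A^2 = 0) by nra. nra. }
    exists (sqrt (1 - (x/A)^2)).
    assert (hc : (x/A)^2 <= 1).
    { replace ((x/A)^2) with (x^2 / A^2) by (field; lra).
      apply Rmult_le_reg_r with (A^2). nra.
      unfold Rdiv. rewrite Rmult_assoc, Rinv_l by nra. nra. }
    split; [|split].
    + rewrite pow2_sqrt by lra. ring.
    + field. lra.
    + rewrite hB, hy0. ring.
  - exists (y / B).
    split; [|split].
    + replace ((x/A)^2 + (y/B)^2) with ((x^2 * (B*B) + y^2 * A^2) / (A^2 * (B*B))) by (field; lra).
      rewrite hy, hB2. field. split; nra.
    + field. lra.
    + field. lra.
Qed.

Lemma cheb_uv (u v w : C) : Cplus u v = Cmult (RtoC 2) w -> Cmult u v = RtoC 1 ->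
  forall k, Cmult (RtoC 2) (chebT k w) = Cplus (Cpow u k) (Cpow v k).
Proof.
  intros huv hm.
  assert (forall k, Cmult (RtoC 2) (chebT k w) = Cplus (Cpow u k) (Cpow v k) /\
                    Cmult (RtoC 2) (chebT (S k) w) = Cplus (Cpow u (S k)) (Cpow v (S k))).
  { induction k as [|k [IH1 IH2]].
    - split.
      + simpl. unfold RtoC; apply injective_projections; simpl; ring.
      + change (chebT 1 w) with w. rewrite !Cpow_1_r. symmetry; exact huv.
    - split; [exact IH2|].
      change (chebT (S (S k)) w) with
        (Cminus (Cmult (Cmult (RtoC 2) w) (chebT (S k) w)) (chebT k w)).
      replace (Cmult (RtoC 2) (Cminus (Cmult (Cmult (RtoC 2) w) (chebT (S k) w)) (chebT k w)))
        with (Cminus (Cmult (Cmult (RtoC 2) w) (Cmult (RtoC 2) (chebT (S k) w)))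
                     (Cmult (RtoC 2) (chebT k w))) by ring.
      rewrite IH1, IH2, <- huv.
      simpl.
      replace (Cminus (Cmult (Cplus u v) (Cplus (Cmult u (Cpow u k)) (Cmult v (Cpow v k))))
                      (Cplus (Cpow u k) (Cpow v k)))
        with (Cplus (Cplus (Cmult u (Cmult u (Cpow u k))) (Cmult v (Cmult v (Cpow v k))))
                    (Cmult (Cminus (Cmult u v) (RtoC 1)) (Cplus (Cpow u k) (Cpow v k)))) by ring.
      rewrite hm. unfold RtoC. ring. }
  intro k; apply H.
Qed.

Lemma mono_inv (p q : R) : 1 <= p -> p <= q -> p + / p <= q + / q.
Proof.
  intros h1 h2.
  assert (e1 : p * / p = 1) by (field; lra).
  assert (e2 : q * / q = 1) by (field; lra).
  assert (i1 : 0 < / p <= 1). { split. apply Rinv_0_lt_compat; lra.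
     rewrite <- Rinv_1. apply Rinv_le_contravar; lra. }
  assert (i2 : 0 < / q <= 1). { split. apply Rinv_0_lt_compat; lra.
     rewrite <- Rinv_1. apply Rinv_le_contravar; lra. }
  assert (id : /p - /q = /p * /q * (q - p)).
  { replace (/p - /q) with (/p * /q * (q - p)) by (field; lra). reflexivity. }
  assert (0 <= (q - p) * (1 - /p * /q)) by (apply Rmult_le_pos; nra).
  nra.
Qed.

Lemma le_rho (R0 rho : R) : 1 <= R0 -> 1 <= rho -> R0 + / R0 <= rho + / rho -> R0 <= rho.
Proof.
  intros h1 h2 h3. destruct (Rle_lt_dec R0 rho) as [h|h]; [exact h|].
  exfalso.
  assert (e1 : R0 * / R0 = 1) by (field; lra).
  assert (e2 : rho * / rho = 1) by (field; lra).
  assert (i1 : 0 < / R0) by (apply Rinv_0_lt_compat; lra).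
  assert (i2 : 0 < / rho) by (apply Rinv_0_lt_compat; lra).
  assert (id : /rho - /R0 = /rho * /R0 * (R0 - rho)) by (field; lra).
  assert (/rho * /R0 < 1).
  { assert (/R0 < 1). { rewrite <- Rinv_1. apply Rinv_lt_contravar; lra. }
    assert (/rho <= 1). { rewrite <- Rinv_1. apply Rinv_le_contravar; lra. }
    nra. }
  nra.
Qed.

Lemma cheb_bound (w : C) (rho : R) : 1 <= rho -> Aof w <= (rho + / rho) / 2 ->
  forall k, Cmod (chebT k w) <= (rho ^ k + / rho ^ k) / 2.
Proof.
  intros hr hw k.
  destruct (geom w) as [hA [c [s [hcs [hx hy]]]]].
  set (A := Aof w) in *.
  set (B := sqrt (A^2 - 1)) in *.
  assert (hB2 : B * B = A^2 - 1) by (apply sqrt_sqrt; nra).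
  assert (hB0 : 0 <= B) by apply sqrt_pos.
  assert (hBA : B < A) by nra.
  set (R0 := A + B).
  assert (hR1 : 1 <= R0) by (unfold R0; lra).
  assert (hinv : A - B = / R0) by (unfold R0; field_simplify_eq; [nra | lra]).
  assert (hRr : R0 <= rho).
  { apply le_rho; auto. rewrite <- hinv. unfold R0. lra. }
  destruct w as [x y]. simpl in hx, hy.
  set (u := (R0 * c, R0 * s) : C).
  set (v := ((A - B) * c, - ((A - B) * s)) : C).
  assert (huv : Cplus u v = Cmult (RtoC 2) (x, y)).
  { unfold u, v, R0, RtoC, Cplus, Cmult; simpl. rewrite hx, hy.
    apply injective_projections; simpl; ring. }
  assert (hm : Cmult u v = RtoC 1).
  { assert (hp : R0 * (A - B) = 1) by (rewrite hinv; field; lra).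
    unfold u, v, RtoC, Cmult; simpl.
    apply injective_projections; simpl; nra. }
  assert (hmu : Cmod u = R0).
  { unfold Cmod, u; simpl fst; simpl snd.
    replace ((R0 * c)^2 + (R0 * s)^2) with (R0^2 * (c^2+s^2)) by ring.
    rewrite hcs, Rmult_1_r.
    apply sqrt_pow2; lra. }
  assert (hmv : Cmod v = A - B).
  { unfold Cmod, v; simpl fst; simpl snd.
    replace (((A-B) * c)^2 + (- ((A-B) * s))^2) with ((A-B)^2 * (c^2+s^2)) by ring.
    rewrite hcs, Rmult_1_r.
    apply sqrt_pow2; lra. }
  pose proof (cheb_uv u v (x,y) huv hm k) as E.
  assert (E2 : Cmod (chebT k (x,y)) = Cmod (Cplus (Cpow u k) (Cpow v k)) / 2).
  { rewrite <- E, Cmod_mult, Cmod_R, Rabs_pos_eq by lra. field. }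
  rewrite E2.
  apply Rmult_le_compat_r; [lra|].
  eapply Rle_trans; [apply Cmod_triangle|].
  rewrite !Cmod_pow, hmu, hmv, hinv.
  rewrite pow_inv.
  apply mono_inv.
  - apply pow_R1_Rle; lra.
  - apply pow_incr; lra.
Qed.

Lemma exp_part (z : C) (rho s alpha beta : R) : 1 <= rho -> 0 <= s <= 1 ->
  Aof z <= (rho + / rho) / 2 ->
  s * (alpha - (alpha * fst z - beta * snd z)) <=
  alpha + / 2 * sqrt (alpha ^ 2 * (rho + / rho) ^ 2 + beta ^ 2 * (rho - / rho) ^ 2).
Proof.
  intros hr hs hz.
  destruct (geom z) as [hA [c [s' [hcs [hx hy]]]]].
  set (A := Aof z) in *.
  set (B := sqrt (A^2 - 1)) in *.
  assert (hB2 : B * B = A^2 - 1) by (apply sqrt_sqrt; nra).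
  rewrite hx, hy. clear hx hy. clearbody A. clear z.
  set (ir := / rho).
  assert (hir : rho * ir = 1) by (unfold ir; field; lra).
  set (X := alpha ^ 2 * (rho + ir) ^ 2 + beta ^ 2 * (rho - ir) ^ 2).
  set (Y := alpha^2 * A^2 + beta^2 * (B*B)).
  set (tq := alpha * (A * c) - beta * (B * s')).
  assert (hY0 : 0 <= Y).
  { unfold Y. apply Rplus_le_le_0_compat; apply Rmult_le_pos; try apply pow2_ge_0.
    rewrite hB2. nra. }
  assert (hid : Y * (c^2 + s'^2) - tq^2 = (alpha * A * s' + beta * B * c)^2) by (unfold Y, tq; ring).
  rewrite hcs, Rmult_1_r in hid.
  assert (htt : tq^2 <= Y) by (pose proof (pow2_ge_0 (alpha * A * s' + beta * B * c)); lra).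
  assert (hsY : - tq <= sqrt Y).
  { destruct (Rle_lt_dec 0 tq) as [h|h].
    - pose proof (sqrt_pos Y); lra.
    - rewrite <- (sqrt_pow2 (-tq)) by lra. apply sqrt_le_1_alt. nra. }
  assert (hYX : 4 * Y <= X).
  { assert (hz' : A <= (rho + ir)/2) by exact hz.
    assert (ha : A^2 <= ((rho + ir)/2)^2).
    { assert (0 <= ((rho+ir)/2 - A) * ((rho+ir)/2 + A)) by (apply Rmult_le_pos; lra). nra. }
    assert (hb : ((rho + ir)/2)^2 - 1 = ((rho - ir)/2)^2) by nra.
    unfold X, Y. rewrite hB2. nra. }
  assert (h2Y : 2 * sqrt Y <= sqrt X).
  { rewrite <- (sqrt_pow2 (2 * sqrt Y)) by (pose proof (sqrt_pos Y); lra).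
    apply sqrt_le_1_alt.
    replace ((2 * sqrt Y)^2) with (4 * (sqrt Y ^ 2)) by ring.
    rewrite pow2_sqrt by lra. exact hYX. }
  assert (hal : Rabs alpha <= sqrt Y).
  { rewrite <- (sqrt_pow2 (Rabs alpha)) by apply Rabs_pos.
    apply sqrt_le_1_alt. rewrite pow2_abs. unfold Y.
    assert (0 <= beta^2 * (B*B)) by (rewrite hB2; apply Rmult_le_pos; [apply pow2_ge_0|nra]).
    assert (alpha^2 <= alpha^2 * A^2).
    { rewrite <- (Rmult_1_r (alpha^2)) at 1. apply Rmult_le_compat_l; [apply pow2_ge_0|nra]. }
    lra. }
  assert (hE : 0 <= alpha + sqrt Y).
  { pose proof (Rle_abs (- alpha)). rewrite Rabs_Ropp in H. lra. }
  fold tq. nra.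
Qed.

Lemma Cmod_cexp (q : C) : Cmod (cexp q) = exp (fst q).
Proof.
  unfold Cmod, cexp; simpl fst; simpl snd.
  replace ((exp (fst q) * cos (snd q))^2 + (exp (fst q) * sin (snd q))^2)
    with (exp (fst q) ^ 2 * (Rsqr (sin (snd q)) + Rsqr (cos (snd q)))) by (unfold Rsqr; ring).
  rewrite sin2_cos2, Rmult_1_r. apply sqrt_pow2. left; apply exp_pos.
Qed.

Lemma csum_bound (psi : nat -> C) (w : C) (rho : R) (K : nat) :
  (forall k, Cmod (chebT k w) <= (rho ^ k + / rho ^ k) / 2) ->
  Cmod (csum (fun k => Cmult (psi k) (chebT k w)) K) <=
  rsum (fun k => Cmod (psi k) * (rho ^ k + / rho ^ k)) K / 2.
Proof.
  intros hT. induction K as [|K IH]; simpl.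
  - rewrite Cmod_R, Rabs_R0. lra.
  - eapply Rle_trans; [apply Cmod_triangle|].
    rewrite Cmod_mult.
    assert (Cmod (psi (S K)) * Cmod (chebT (S K) w) <=
            Cmod (psi (S K)) * ((rho ^ S K + / rho ^ S K) / 2)).
    { apply Rmult_le_compat_l; [apply Cmod_ge_0| apply hT]. }
    simpl in H. lra.
Qed.

Theorem lemmaC3 (rho t alpha beta : R) (K : nat) (psi : nat -> C) :
  1 <= rho -> -1 <= t <= 1 ->
  forall z : C, bernstein_ellipse rho z ->
  Cmod (Cmult (Cmult (RtoC ((t + 1) / 2))
                     (cexp (Cmult (Cmult (alpha, beta) (RtoC ((t + 1) / 2)))
                                  (Cminus (RtoC 1) z))))
              (cheb_series psi K
                 (Cminus (Cmult (RtoC ((t + 1) / 2)) (Cplus z (RtoC 1))) (RtoC 1))))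
  <= (t + 1) / 2
     * exp (alpha + / 2 * sqrt (alpha ^ 2 * (rho + / rho) ^ 2
                                + beta ^ 2 * (rho - / rho) ^ 2))
     * (Cmod (psi O) + rsum (fun k => Cmod (psi k) * (rho ^ k + / rho ^ k)) K).
Proof.
  intros hr ht z hz.
  set (s := (t + 1) / 2).
  assert (hs : 0 <= s <= 1) by (unfold s; lra).
  set (w := Cminus (Cmult (RtoC s) (Cplus z (RtoC 1))) (RtoC 1)).
  assert (h2 : 1 + / 1 <= rho + / rho) by (apply mono_inv; lra).
  rewrite Rinv_1 in h2.
  assert (hzA : Aof z <= (rho + / rho) / 2) by (unfold Aof, bernstein_ellipse in *; lra).
  assert (hwA : Aof w <= (rho + / rho) / 2).
  { unfold Aof.
    assert (e1 : Cplus w (RtoC 1) = Cmult (RtoC s) (Cplus z (RtoC 1))) by (unfold w; ring).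
    assert (e2 : Cminus w (RtoC 1) = Cplus (Cmult (RtoC s) (Cminus z (RtoC 1))) (RtoC (2 * (s - 1)))).
    { unfold w. destruct z as [x y]. unfold RtoC, Cminus, Cplus, Cmult, Copp.
      apply injective_projections; simpl; ring. }
    rewrite e1, e2.
    pose proof (Cmod_triangle (Cmult (RtoC s) (Cminus z (RtoC 1))) (RtoC (2 * (s - 1)))).
    rewrite !Cmod_mult, !Cmod_R, Rabs_pos_eq in * by lra.
    rewrite (Rabs_left1 (2 * (s - 1))) in H by lra.
    unfold bernstein_ellipse in hz.
    assert (s * (Cmod (Cminus z (RtoC 1)) + Cmod (Cplus z (RtoC 1))) <= s * (rho + / rho))
      by (apply Rmult_le_compat_l; lra).
    assert (0 <= (1 - s) * (rho + / rho - 2)) by (apply Rmult_le_pos; lra). lra. }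
  set (E := alpha + / 2 * sqrt (alpha ^ 2 * (rho + / rho) ^ 2 + beta ^ 2 * (rho - / rho) ^ 2)).
  assert (hexp : Cmod (cexp (Cmult (Cmult (alpha, beta) (RtoC s)) (Cminus (RtoC 1) z))) <= exp E).
  { rewrite Cmod_cexp. destruct z as [x y].
    assert (fst (Cmult (Cmult (alpha, beta) (RtoC s)) (Cminus (RtoC 1) (x, y))) =
            s * (alpha - (alpha * fst (x,y) - beta * snd (x,y)))) by (simpl; ring).
    rewrite H. destruct (exp_part (x,y) rho s alpha beta hr hs hzA) as [h|h].
    - left. apply exp_increasing. exact h.
    - right. f_equal. exact h. }
  assert (hpsi : Cmod (cheb_series psi K w) <=
     Cmod (psi O) + rsum (fun k => Cmod (psi k) * (rho ^ k + / rho ^ k)) K).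
  { unfold cheb_series. eapply Rle_trans; [apply Cmod_triangle|].
    rewrite Cmod_mult, Cmod_R, Rabs_pos_eq by lra.
    pose proof (csum_bound psi w rho K (cheb_bound w rho hr hwA)). lra. }
  rewrite !Cmod_mult, Cmod_R, Rabs_pos_eq by lra.
  apply Rmult_le_compat.
  - apply Rmult_le_pos; [lra|apply Cmod_ge_0].
  - apply Cmod_ge_0.
  - apply Rmult_le_compat_l; lra.
  - exact hpsi.
Qed.
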